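(* For every $k\ge0$, every $n$-vertex graph of clique-width at most $k$ has a partial orientation $\vec{H}$ of maximum outdegree $O(k\log n)$ that is a weak $\infty$-guidance system.
   Context: All graphs are finite, simple and undirected. A partial orientation of $G$ is a directed graph $\vec{H}$ on $V(G)$ with every $(u,v)\in E(\vec{H})$ satisfying $uv\in E(G)$. $B_{\vec{H}}(v,a)$ is the set of vertices reachable from $v$ by a directed path of length at most $a$. A weak $r$-guidance system is a partial orientation $\vec{H}$ such that for any distinct $u,v$ at distance $\ell\le r$ in $G$ there exist non-negative integers $a,b$ with $a+b=\ell-1$ such that $G$ has an edge between $B_{\vec{H}}(u,a)$ and $B_{\vec{H}}(v,b)$; a weak $\infty$-guidance system is one that is a weak $r$-guidance system for every positive integer $r$. A $k$-labeled graph is a graph with each vertex labeled from $[k]$. Constructible $k$-labeled graphs are the smallest family containing all one-vertex $k$-labeled graphs and closed under disjoint unions, relabeling all vertices of label $i$ to label $j$, and adding all edges between vertices of labels $i$ and $j$. A graph has clique-width at most $k$ if its vertices can be labeled so that the resulting $k$-labeled graph is constructible. The $O(\cdot)$ hides an absolute constant. *)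

(* Defs.v *)
From mathcomp Require Import all_boot.
Set Implicit Arguments. Unset Strict Implicit. Unset Printing Implicit Defensive.

Section Defs.
Variable T : finType.

Definition simple_graph (e : rel T) := symmetric e /\ irreflexive e.

Definition partial_orientation (e H : rel T) := forall u v, H u v -> e u v.

Definition outdeg (H : rel T) (u : T) : nat := #|[set v | H u v]|.

Definition walk (r : rel T) (u v : T) (l : nat) : Prop :=
  exists s : seq T, size s = l /\ path r u s /\ last u s = v.

Definition dist_is (e : rel T) (u v : T) (l : nat) : Prop :=
  walk e u v l /\ forall l', l' < l -> ~ walk e u v l'.

Definition ball (H : rel T) (v : T) (a : nat) (x : T) : Prop :=
  exists l, l <= a /\ walk H v x l.

Definition weak_guidance (e H : rel T) (r : nat) : Prop :=
  forall u v l, u != v -> l <= r -> dist_is e u v l ->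
    exists a b, a + b = l.-1 /\
      exists x y, ball H u a x /\ ball H v b y /\ e x y.

Definition weak_inf_guidance (e H : rel T) : Prop :=
  forall r, 0 < r -> weak_guidance e H r.

Inductive cwexp : Type :=
| CVtx of T & nat
| CUnion of cwexp & cwexp
| CRelab of nat & nat & cwexp
| CJoin of nat & nat & cwexp.

Fixpoint cw_verts (t : cwexp) : {set T} :=
  match t with
  | CVtx x _ => [set x]
  | CUnion a b => cw_verts a :|: cw_verts b
  | CRelab _ _ a => cw_verts a
  | CJoin _ _ a => cw_verts a
  end.

Fixpoint cw_lab (t : cwexp) : T -> nat :=
  match t with
  | CVtx _ i => fun _ => i
  | CUnion a b => fun x => if x \in cw_verts a then cw_lab a x else cw_lab b x
  | CRelab i j a => fun x => if cw_lab a x == i then j else cw_lab a x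
  | CJoin _ _ a => cw_lab a
  end.

Fixpoint cw_edges (t : cwexp) : rel T :=
  match t with
  | CVtx _ _ => fun _ _ => false
  | CUnion a b => fun x y => cw_edges a x y || cw_edges b x y
  | CRelab _ _ a => cw_edges a
  | CJoin i j a => fun x y =>
      cw_edges a x y ||
      [&& x \in cw_verts a, y \in cw_verts a &
          ((cw_lab a x == i) && (cw_lab a y == j)) ||
          ((cw_lab a x == j) && (cw_lab a y == i))]
  end.

Fixpoint cw_wf (k : nat) (t : cwexp) : bool :=
  match t with
  | CVtx _ i => i < k
  | CUnion a b => [&& cw_wf k a, cw_wf k b & [disjoint cw_verts a & cw_verts b]]
  | CRelab i j a => [&& i < k, j < k & cw_wf k a]
  | CJoin i j a => [&& i < k, j < k, i != j & cw_wf k a]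
  end.

Definition cw_le (k : nat) (e : rel T) : Prop :=
  exists t : cwexp, cw_wf k t /\ cw_verts t = [set: T] /\
    forall x y, e x y = cw_edges t x y.

End Defs.

(* Main.v *)
Require Import Defs.
From mathcomp Require Import all_boot.
From mathcomp Require Import zify.
From Stdlib Require Import Classical ClassicalEpsilon.
Set Implicit Arguments. Unset Strict Implicit. Unset Printing Implicit Defensive.

Lemma fchoice (A B : Type) (P : A -> B -> Prop) :
  (forall a, exists b, P a b) -> exists f : A -> B, forall a, P a (f a).
Proof.
move=> H; exists (fun a => proj1_sig (constructive_indefinite_description _ (H a))).
by move=> a; case: (constructive_indefinite_description _ _).
Qed.

Lemma ex_min (P : nat -> Prop) : (exists n, P n) -> exists n, P n /\ forall m, m < n -> ~ P m.
Proof.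
move=> [n Pn]; apply: NNPP => Hno.
suff H : forall n j, j <= n -> ~ P j by exact: (H n n (leqnn n)).
elim=> [|n' IH] j Hj Pj.
  move: Hj; rewrite leqn0 => /eqP Ej; subst j.
  by apply: Hno; exists 0; split=> // m.
case: (ltnP j n'.+1) => Hj'.
  by apply: (IH j).
have Ej : j = n'.+1 by apply/eqP; rewrite eqn_leq Hj Hj'.
subst j; apply: Hno; exists n'.+1; split=> // m Hm; exact: IH.
Qed.

Section Walks.
Variable T : finType.
Implicit Types (r : rel T).

Lemma walk0 r u v : walk r u v 0 <-> u = v.
Proof.
split; first by move=> [[|x s] [//= _ [_ <-]]].
by move=> ->; exists [::].
Qed.

Lemma walkS r u v l : walk r u v l.+1 <-> exists w, r u w /\ walk r w v l.
Proof.
split.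
  move=> [[|w s] [//= [Hs] [/andP [Huw Hp] Hl]]].
  by exists w; split=> //; exists s.
move=> [w [Huw [s [Hs [Hp Hl]]]]]; exists (w :: s); split; first by rewrite /= Hs.
by rewrite /= Huw Hp.
Qed.

Lemma walk_snoc r u w v l : walk r u w l -> r w v -> walk r u v l.+1.
Proof.
move=> [s [Hs [Hp Hl]]] Hwv; exists (rcons s v).
by rewrite size_rcons Hs rcons_path Hp Hl Hwv last_rcons.
Qed.

Lemma walk_rev r u v l : symmetric r -> walk r u v l -> walk r v u l.
Proof.
move=> Hsym; elim: l u => [|l IH] u.
  by move/walk0 => ->; apply/walk0.
move/walkS => [w [Huw Hw]]; apply: walk_snoc (IH _ Hw) _.
by rewrite Hsym.
Qed.

Lemma walk_mono r r' u v l : (forall x y, r x y -> r' x y) -> walk r u v l -> walk r' u v l.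
Proof.
move=> Hs [s [Hsz [Hp Hl]]]; exists s; split=> //; split=> //.
exact: sub_path Hp.
Qed.

Lemma ball_mono r r' u a x : (forall x y, r x y -> r' x y) -> ball r u a x -> ball r' u a x.
Proof. by move=> Hs [l [Hl Hw]]; exists l; split=> //; apply: walk_mono Hw. Qed.

Lemma ball_cons r u w a x : r u w -> ball r w a x -> ball r u a.+1 x.
Proof. by move=> Huw [l [Hl Hw]]; exists l.+1; split=> //; apply/walkS; exists w. Qed.

Definition reachS r (S : T -> Prop) (w : T) (m : nat) :=
  exists x l, S x /\ l <= m /\ walk r w x l.

Lemma toward r (S : T -> Prop) : exists g : T -> option T,
  (forall w w', g w = Some w' -> r w w') /\
  forall m w, reachS r S w m -> exists x, S x /\ ball (fun a b => g a == Some b) w m x.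
Proof.
pose Spec w (o : option T) :=
  (~ S w -> forall m, reachS r S w m.+1 -> exists w', o = Some w' /\ reachS r S w' m)
  /\ (forall w', o = Some w' -> r w w').
have Hex : forall w, exists o, Spec w o.
  move=> w; case: (classic (exists m, ~ S w /\ reachS r S w m.+1)) => Hc.
    have [d [[HnS Hd] Hmin]] := ex_min Hc.
    move: Hd => [x [l [Sx [Hl Hw]]]].
    case: l Hl Hw => [|l] Hl Hw.
      by move/walk0: Hw => Ew; subst x.
    move/walkS: Hw => [w' [Hww' Hw']].
    exists (Some w'); split; last by move=> w'' [<-].
    move=> _ m Hm; exists w'; split=> //.
    have Hdm : d <= m.
      rewrite leqNgt; apply/negP => Hmd; apply: (Hmin m Hmd); by split.
    by exists x, l; split=> //; split=> //; apply: leq_trans Hdm.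
  exists None; split=> // HnS m Hm; exfalso; apply: Hc; by exists m.
have [g Hg] := fchoice Hex.
exists g; split; first by move=> w w' Hw; apply: (proj2 (Hg w)).
elim=> [|m IH] w.
  move=> [x [l [Sx [Hl Hw]]]]; move: Hl; rewrite leqn0 => /eqP El; subst l.
  move/walk0: Hw => Ew; subst x; exists w; split=> //; exists 0; split=> //.
  exact/walk0.
move=> Hr; case: (classic (S w)) => HS.
  by exists w; split=> //; exists 0; split=> //; apply/walk0.
have [w' [Hgw Hr']] := proj1 (Hg w) HS m Hr.
have [x [Sx Hb]] := IH w' Hr'.
exists x; split=> //; apply: ball_cons Hb; by rewrite Hgw.
Qed.

Lemma card_someseq (s : seq (option T)) : #|[set y | Some y \in s]| <= size s.
Proof.
have -> : [set y | Some y \in s] = [set y in pmap id s].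
  by apply/setP => y; rewrite !inE mem_pmap map_id.
rewrite cardsE; apply: leq_trans (card_size _) _.
by rewrite size_pmap count_size.
Qed.

End Walks.


Section Guide.
Variable T : finType.
Variable e : rel T.
Hypothesis esym : symmetric e.
Variable k : nat.

Definition ind (W : {set T}) : rel T := fun x y => [&& x \in W, y \in W & e x y].

Lemma ind_sym W : symmetric (ind W).
Proof. by move=> x y; rewrite /ind esym andbCA. Qed.

Lemma ind_sub (A W : {set T}) : A \subset W -> forall x y, ind A x y -> ind W x y.
Proof.
move=> HAW x y /and3P [Hx Hy Hxy]; apply/and3P; split=> //; exact: (subsetP HAW).
Qed.

Lemma walk_ind_ends W u v l : walk (ind W) u v l.+1 -> u \in W /\ v \in W.
Proof.
move=> Hw; split.
  by move/walkS: Hw => [w [/and3P [] ]].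
move/walk_rev: Hw => /(_ (ind_sym W)).
by move/walkS => [w [/and3P [] ]].
Qed.

Lemma cross (A W : {set T}) u v l : walk (ind W) u v l -> u \in W ->
  (u \in A /\ walk (ind A) u v l) \/ (u \in W :\: A /\ walk (ind (W :\: A)) u v l) \/
  exists j m p q, j + m.+1 = l /\ walk (ind W) u p j /\ ind W p q /\
     walk (ind W) q v m /\ ((p \in A /\ q \notin A) \/ (p \notin A /\ q \in A)).
Proof.
elim: l u => [|l IH] u.
  move/walk0 => -> HuW; case: (boolP (v \in A)) => HvA.
    by left; split=> //; apply/walk0.
  by right; left; split; [rewrite inE HvA | apply/walk0].
move/walkS => [w [Huw Hw]] HuW.
have HwW : w \in W by case/and3P: Huw.
have Hue : e u w by case/and3P: Huw.
case: (IH w Hw HwW) => [[HwA HwalkA]|[[HwB HwalkB]|[j [m [p [q [Hjm [H1 [H2 [H3 H4]]]]]]]]]].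
- case: (boolP (u \in A)) => HuA.
    left; split=> //; apply/walkS; exists w; split=> //; by rewrite /ind HuA HwA.
  right; right; exists 0, l, u, w; split=> //; split; first by apply/walk0.
  by split=> //; split=> //; right.
- case: (boolP (u \in A)) => HuA.
    right; right; exists 0, l, u, w; split=> //; split; first by apply/walk0.
    have HwnA : w \notin A by move: HwB; rewrite inE => /andP [].
    by split=> //; split=> //; left.
  right; left; split; first by rewrite inE HuA.
  apply/walkS; exists w; split=> //; apply/and3P; split=> //; by rewrite inE HuA.
- right; right; exists j.+1, m, p, q; split; first by rewrite -Hjm.
  split=> //; apply/walkS; by exists w.
Qed.

Definition guid (W : {set T}) (H : rel T) := forall u v l, u != v ->
  dist_is (ind W) u v l ->
  exists a b, a + b = l.-1 /\ exists x y, ball H u a x /\ ball H v b y /\ e x y.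

Definition Sep := forall W : {set T}, 2 <= #|W| -> exists A : {set T},
  A \subset W /\ 3 * #|A| <= 2 * #|W| /\ 3 * #|W :\: A| <= 2 * #|W| /\
  exists cls : T -> nat, (forall x, x \in A -> cls x < k) /\
  forall x x' y, x \in A -> x' \in A -> cls x = cls x' -> y \in W :\: A -> e x y = e x' y.

Hypothesis sep : Sep.

Lemma two_le (W : {set T}) u v : u \in W -> v \in W -> u != v -> 2 <= #|W|.
Proof.
move=> Hu Hv Huv.
have Hs : [set u; v] \subset W by apply/subsetP => x; rewrite !inE => /orP [] /eqP ->.
by have := subset_leq_card Hs; rewrite cards2 Huv.
Qed.

Lemma small_guid (W : {set T}) : #|W| < 2 -> guid W (fun _ _ => false).
Proof.
move=> Hs u v l Huv [Hw _]; exfalso.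
case: l Hw => [|l] Hw.
  by move/walk0: Hw => E; rewrite E eqxx in Huv.
have [Hu Hv] := walk_ind_ends Hw.
by move: (two_le Hu Hv Huv); rewrite leqNgt Hs.
Qed.

Lemma outdeg0 (H : rel T) u : (forall y, H u y -> False) -> outdeg H u = 0.
Proof.
move=> Hf; rewrite /outdeg; apply/eqP; rewrite cards_eq0; apply/eqP/setP => y.
by rewrite inE in_set0; apply/negP => /Hf.
Qed.

Lemma cardsU_le (A B : {set T}) : #|A :|: B| <= #|A| + #|B|.
Proof. by rewrite cardsU leq_subr. Qed.

Lemma claim L : forall W : {set T}, 2 ^ L * #|W| < 2 * 3 ^ L -> exists H : rel T,
  (forall x y, H x y -> x \in W /\ e x y) /\ (forall u, outdeg H u <= 2 * k * L) /\ guid W H.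
Proof.
elim: L => [|L IH] W HW.
  exists (fun _ _ => false); split=> //; split; last by apply: small_guid; rewrite expn0 mul1n in HW.
  by move=> u; rewrite outdeg0.
case: (ltnP #|W| 2) => Hsmall.
  exists (fun _ _ => false); split=> //; split; last exact: small_guid.
  by move=> u; rewrite outdeg0.
have [A [HAW [HA3 [HB3 [cls [Hlt Htwin]]]]]] := sep Hsmall.
set B := W :\: A.
have HBW : B \subset W by apply: subsetDl.
have [HA [HAs [HAd HAg]]] : exists H : rel T,
  (forall x y, H x y -> x \in A /\ e x y) /\ (forall u, outdeg H u <= 2 * k * L) /\ guid A H.
  apply: IH; move: HW; rewrite !expnS => HW; nia.
have [HB [HBs [HBd HBg]]] : exists H : rel T,
  (forall x y, H x y -> x \in B /\ e x y) /\ (forall u, outdeg H u <= 2 * k * L) /\ guid B H.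
  apply: IH; rewrite /B; move: HW HB3; rewrite !expnS => HW HB3'; nia.
pose S1 (c : 'I_k) := fun x => x \in A /\ cls x = c.
pose S2 (c : 'I_k) := fun y => y \in B /\ exists x, x \in A /\ cls x = c /\ e x y.
have [G1 HG1] := fchoice (fun c => toward (ind W) (S1 c)).
have [G2 HG2] := fchoice (fun c => toward (ind W) (S2 c)).
pose H := fun x y => [|| HA x y, HB x y |
   [exists c : 'I_k, (G1 c x == Some y) || (G2 c x == Some y)]].
have HAH : forall x y, HA x y -> H x y by move=> x y h; rewrite /H h.
have HBH : forall x y, HB x y -> H x y by move=> x y h; rewrite /H h orbT.
have HG1H : forall c x y, G1 c x == Some y -> H x y.
  move=> c x y h; rewrite /H; apply/orP; right; apply/orP; right.
  by apply/existsP; exists c; rewrite h.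
have HG2H : forall c x y, G2 c x == Some y -> H x y.
  move=> c x y h; rewrite /H; apply/orP; right; apply/orP; right.
  by apply/existsP; exists c; rewrite h orbT.
exists H; split.
  move=> x y /or3P [h|h|/existsP [c /orP [/eqP h|/eqP h]]].
  - by have [? ?] := HAs _ _ h; split=> //; apply: (subsetP HAW).
  - by have [? ?] := HBs _ _ h; split=> //; apply: (subsetP HBW).
  - by have /and3P [] := proj1 (HG1 c) _ _ h.
  - by have /and3P [] := proj1 (HG2 c) _ _ h.
split.
  move=> u.
  pose s := [seq G1 c u | c <- enum 'I_k] ++ [seq G2 c u | c <- enum 'I_k].
  have Hsub : [set y | H u y] \subset
     ([set y | HA u y] :|: [set y | HB u y]) :|: [set y | Some y \in s].
    apply/subsetP => y; rewrite !inE => /or3P [h|h|/existsP [c /orP [/eqP h|/eqP h]]].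
    - by rewrite h.
    - by rewrite h orbT.
    - by rewrite -h mem_cat map_f ?orbT // mem_enum.
    - by rewrite -h mem_cat (map_f (fun c => G2 c u)) ?orbT // mem_enum.
  have Hs : size s = 2 * k.
    by rewrite size_cat !size_map -enumT size_enum_ord addnn mul2n.
  have H1 := subset_leq_card Hsub.
  have H2 := cardsU_le ([set y | HA u y] :|: [set y | HB u y]) [set y | Some y \in s].
  have H3 := cardsU_le [set y | HA u y] [set y | HB u y].
  have H4 := card_someseq s.
  have H5 : outdeg HA u + outdeg HB u <= 2 * k * L.
    case: (boolP (u \in A)) => HuA.
      have -> : outdeg HB u = 0 by apply: outdeg0 => y /HBs []; rewrite /B inE HuA.
      by rewrite addn0.
    have -> : outdeg HA u = 0 by apply: outdeg0 => y /HAs [] /(negP HuA).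
    by rewrite add0n.
  rewrite /outdeg in H5 *; rewrite Hs in H4; rewrite mulnS; lia.
move=> u v l Huv [Hwalk Hmin].
case: l Hwalk Hmin => [|l] Hwalk Hmin.
  by move/walk0: Hwalk => E; rewrite E eqxx in Huv.
have [HuW HvW] := walk_ind_ends Hwalk.
case: (cross A Hwalk HuW) => [[HuA HwA]|[[HuB HwB]|[j [m [p [q [Hjm [Wup [Hpq [Wqv Hside]]]]]]]]]].
- have [a [b [Hab [x [y [Hx [Hy Hxy]]]]]]] : exists a b, a + b = l.+1.-1 /\
      exists x y, ball HA u a x /\ ball HA v b y /\ e x y.
    apply: HAg => //; split=> // l' Hl' Hw; apply: (Hmin l' Hl').
    exact: walk_mono (ind_sub HAW) Hw.
  exists a, b; split=> //; exists x, y; split; first exact: ball_mono HAH Hx.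
  by split=> //; exact: ball_mono HAH Hy.
- have [a [b [Hab [x [y [Hx [Hy Hxy]]]]]]] : exists a b, a + b = l.+1.-1 /\
      exists x y, ball HB u a x /\ ball HB v b y /\ e x y.
    apply: HBg => //; split=> // l' Hl' Hw; apply: (Hmin l' Hl').
    exact: walk_mono (ind_sub HBW) Hw.
  exists a, b; split=> //; exists x, y; split; first exact: ball_mono HBH Hx.
  by split=> //; exact: ball_mono HBH Hy.
have Wvq := walk_rev (ind_sym W) Wqv.
have [HpW HqW] : p \in W /\ q \in W by case/and3P: Hpq.
have Hepq : e p q by case/and3P: Hpq.
exists j, m; split; first by rewrite -Hjm addnS.
case: Hside => [[HpA HqnA]|[HpnA HqA]].
- pose c := Ordinal (Hlt p HpA).
  have [x [[HxA Hxc] Hbx]] := proj2 (HG1 c) j u (ex_intro _ p (ex_intro _ j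
        (conj (conj HpA erefl : S1 c p) (conj (leqnn j) Wup)))).
  have HqB : q \in B by rewrite /B inE HqnA HqW.
  have HS2 : S2 c q by split=> //; exists p.
  have [y [[HyB [x0 [Hx0A [Hx0c Hx0y]]]] Hby]] := proj2 (HG2 c) m v
        (ex_intro _ q (ex_intro _ m (conj HS2 (conj (leqnn m) Wvq)))).
  exists x, y; split; first exact: ball_mono (HG1H c) Hbx.
  split; first exact: ball_mono (HG2H c) Hby.
  by rewrite (Htwin x x0 y) // Hxc Hx0c.
- pose c := Ordinal (Hlt q HqA).
  have HpB : p \in B by rewrite /B inE HpnA HpW.
  have HS2 : S2 c p by split=> //; exists q; split=> //; split=> //; rewrite esym.
  have [x [[HxB [x0 [Hx0A [Hx0c Hx0x]]]] Hbx]] := proj2 (HG2 c) j u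
        (ex_intro _ p (ex_intro _ j (conj HS2 (conj (leqnn j) Wup)))).
  have [y [[HyA Hyc] Hby]] := proj2 (HG1 c) m v (ex_intro _ q (ex_intro _ m
        (conj (conj HqA erefl : S1 c q) (conj (leqnn m) Wvq)))).
  exists x, y; split; first exact: ball_mono (HG2H c) Hbx.
  split; first exact: ball_mono (HG1H c) Hby.
  by rewrite esym (Htwin y x0 x) // Hyc Hx0c.
Qed.

End Guide.


Section CW.
Variable T : finType.
Variable k : nat.

Fixpoint subterm (s t : cwexp T) : Prop := s = t \/
  match t with
  | CVtx _ _ => False
  | CUnion a b => subterm s a \/ subterm s b
  | CRelab _ _ a => subterm s a
  | CJoin _ _ a => subterm s a
  end.

Lemma sub_refl (t : cwexp T) : subterm t t.
Proof. by case: t => *; left. Qed.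

Lemma sub_verts s t : subterm s t -> cw_verts s \subset cw_verts t.
Proof.
elim: t => [x i|a IHa b IHb|i j a IHa|i j a IHa] /= [->|H] //.
case: H => H.
  exact: subset_trans (IHa H) (subsetUl _ _).
exact: subset_trans (IHb H) (subsetUr _ _).
all: exact: IHa.
Qed.

Lemma sub_wf s t : subterm s t -> cw_wf k t -> cw_wf k s.
Proof.
elim: t => [x i|a IHa b IHb|i j a IHa|i j a IHa] /= [->|H] //.
- by case/and3P=> Ha Hb _; case: H => H; [apply: IHa | apply: IHb].
- by case/and3P=> _ _ Ha; apply: IHa.
- by case/and4P=> _ _ _ Ha; apply: IHa.
Qed.

Lemma edges_verts (t : cwexp T) (x y : T) : cw_edges t x y -> x \in cw_verts t /\ y \in cw_verts t.
Proof.
elim: t => [z i|a IHa b IHb|i j a IHa|i j a IHa] //=.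
- case/orP=> [/IHa|/IHb] [Hx Hy]; by rewrite !inE Hx Hy ?orbT.
- case/orP=> [/IHa //|/and3P [Hx Hy _]]; by [].
Qed.

Lemma edges_nx (t : cwexp T) (x y : T) : x \notin cw_verts t -> cw_edges t x y = false.
Proof.
move=> Hx; apply/negP => /edges_verts [Hx' _]; by rewrite Hx' in Hx.
Qed.

Lemma lab_lt (t : cwexp T) (x : T) : cw_wf k t -> x \in cw_verts t -> cw_lab t x < k.
Proof.
elim: t => [z i|a IHa b IHb|i j a IHa|i j a IHa] /=.
- by [].
- case/and3P=> Ha Hb _; rewrite inE; case: (boolP (x \in cw_verts a)) => Hxa /=.
    by move=> _; apply: IHa.
  by move=> Hxb; apply: IHb.
- case/and3P=> Hi Hj Ha Hx; case: ifP => // _; exact: IHa.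
- case/and4P=> _ _ _ Ha Hx; exact: IHa.
Qed.

Lemma twin (t : cwexp T) : cw_wf k t -> forall s, subterm s t -> forall x x',
  x \in cw_verts s -> x' \in cw_verts s -> cw_lab s x = cw_lab s x' ->
  cw_lab t x = cw_lab t x' /\
  forall y, y \notin cw_verts s -> cw_edges t x y = cw_edges t x' y.
Proof.
have self : forall (t : cwexp T) (x x' : T), cw_lab t x = cw_lab t x' ->
    cw_lab t x = cw_lab t x' /\
    forall y, y \notin cw_verts t -> cw_edges t x y = cw_edges t x' y.
  move=> t0 x x' Hl; split=> // y Hy.
  case E1 : (cw_edges t0 x y); first by have [_ Hy'] := edges_verts E1; rewrite Hy' in Hy.
  case E2 : (cw_edges t0 x' y); first by have [_ Hy'] := edges_verts E2; rewrite Hy' in Hy.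
  by [].
elim: t => [z i|a IHa b IHb|i j a IHa|i j a IHa] Hwf s [<-|Hs] x x' Hx Hx' Hl;
  try exact: self.
- by [].
- move: Hwf => /= /and3P [Hwa Hwb Hdis].
  case: Hs => Hs.
    have Hxa := subsetP (sub_verts Hs) _ Hx.
    have Hx'a := subsetP (sub_verts Hs) _ Hx'.
    have [IHl IHe] := IHa Hwa s Hs x x' Hx Hx' Hl.
    split; first by rewrite /= Hxa Hx'a.
    move=> y Hy /=; rewrite IHe //.
    by rewrite (edges_nx y (negbT (disjointFr Hdis Hxa))) (edges_nx y (negbT (disjointFr Hdis Hx'a))).
  have Hxb := subsetP (sub_verts Hs) _ Hx.
  have Hx'b := subsetP (sub_verts Hs) _ Hx'.
  have [IHl IHe] := IHb Hwb s Hs x x' Hx Hx' Hl.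
  split; first by rewrite /= (@disjointFl _ _ _ x Hdis Hxb) (@disjointFl _ _ _ x' Hdis Hx'b).
  move=> y Hy /=; rewrite IHe //.
  by rewrite (edges_nx y (negbT (disjointFl Hdis Hxb))) (edges_nx y (negbT (disjointFl Hdis Hx'b))).
- move: Hwf => /= /and3P [_ _ Hwa].
  have [IHl IHe] := IHa Hwa s Hs x x' Hx Hx' Hl.
  by split; [rewrite /= IHl | move=> y Hy /=; rewrite IHe].
- move: Hwf => /= /and4P [_ _ _ Hwa].
  have Hxa := subsetP (sub_verts Hs) _ Hx.
  have Hx'a := subsetP (sub_verts Hs) _ Hx'.
  have [IHl IHe] := IHa Hwa s Hs x x' Hx Hx' Hl.
  by split=> // y Hy /=; rewrite IHe // Hxa Hx'a IHl.
Qed.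

Lemma cardsU_le' (A B : {set T}) : #|A :|: B| <= #|A| + #|B|.
Proof. by rewrite cardsU leq_subr. Qed.

Lemma balanced (t : cwexp T) (W : {set T}) : 2 <= #|W| -> 2 * #|W| < 3 * #|cw_verts t :&: W| ->
  exists s, subterm s t /\ #|W| <= 3 * #|cw_verts s :&: W| <= 2 * #|W|.
Proof.
move=> H2; elim: t => [z i|a IHa b IHb|i j a IHa|i j a IHa] /= Hbig.
- have : #|[set z] :&: W| <= 1 by rewrite -(cards1 z); apply/subset_leq_card/subsetIl.
  lia.
- case: (ltnP (2 * #|W|) (3 * #|cw_verts a :&: W|)) => Ha.
    by have [s [Hs Hb]] := IHa Ha; exists s; split=> //; right; left.
  case: (ltnP (2 * #|W|) (3 * #|cw_verts b :&: W|)) => Hb.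
    by have [s [Hs Hb']] := IHb Hb; exists s; split=> //; right; right.
  have := cardsU_le' (cw_verts a :&: W) (cw_verts b :&: W); rewrite -setIUl => HU.
  case: (leqP #|cw_verts b :&: W| #|cw_verts a :&: W|) => Hab.
    exists a; split; first by right; left; apply: sub_refl.
    apply/andP; split=> //; lia.
  exists b; split; first by right; right; apply: sub_refl.
  apply/andP; split=> //; lia.
- by have [s [Hs Hb]] := IHa Hbig; exists s; split=> //; right.
- by have [s [Hs Hb]] := IHa Hbig; exists s; split=> //; right.
Qed.

End CW.


Lemma pow_ineq t : 4 ^ t * 2 ^ t <= 9 ^ t.
Proof.
elim: t => [|t IH] //.
rewrite !expnS; nia.
Qed.

Theorem corollary35 :
  exists C : nat, forall (k : nat) (T : finType) (e : rel T),
    simple_graph e -> cw_le k e ->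
    exists H : rel T, partial_orientation e H /\
      (forall u, outdeg H u <= C * k * trunc_log 2 #|T|) /\
      weak_inf_guidance e H.
Proof.
exists 4 => k T e [esym _] [t [wf [Hverts Hedges]]].
have sepH : Sep e k.
  move=> W H2.
  have Hbig : 2 * #|W| < 3 * #|cw_verts t :&: W| by rewrite Hverts setTI; lia.
  have [s [Hs Hb]] := balanced H2 Hbig.
  exists (cw_verts s :&: W); split; first exact: subsetIr.
  have HD := cardsDS (subsetIr (cw_verts s) W).
  split; first lia.
  split; first lia.
  exists (cw_lab s); split.
    move=> x; rewrite inE => /andP [Hx _]; exact: lab_lt (sub_wf Hs wf) Hx.
  move=> x x' y; rewrite !inE => /andP [Hx _] /andP [Hx' _] Hl /andP [Hy HyW].
  rewrite !Hedges; apply: (proj2 (twin wf Hs Hx Hx' Hl)).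
  by move: Hy; rewrite HyW andbT.
set tl := trunc_log 2 #|T|.
have Hsz : 2 ^ (2 * tl) * #|[set: T]| < 2 * 3 ^ (2 * tl).
  rewrite cardsT.
  have -> : 2 ^ (2 * tl) = 4 ^ tl by rewrite expnM.
  have -> : 3 ^ (2 * tl) = 9 ^ tl by rewrite expnM.
  have := trunc_log_ltn #|T| (isT : 1 < 2); rewrite -/tl expnS => Hn.
  have := pow_ineq tl.
  have : 0 < 4 ^ tl by rewrite expn_gt0.
  nia.
have [H [Hs [Hd Hg]]] := claim esym sepH Hsz.
exists H; split; first by move=> u v /Hs [].
split; first by move=> u; have := Hd u; nia.
move=> r _ u v l Huv _ [Hw Hmin].
have Heq : forall x y, ind e [set: T] x y = e x y by move=> x y; rewrite /ind !in_setT.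
apply: Hg => //; split.
  by apply: walk_mono Hw => x y; rewrite Heq.
move=> l' Hl' Hw'; apply: (Hmin l' Hl'); apply: walk_mono Hw' => x y; by rewrite Heq.
Qed.
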